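(* Let $(X,d)$ be a quasi-pseudometric space such that every $\bar d$-bounded sequence in $X$ contains a $d^s$-convergent subsequence, and let $f:X\to\mathbb{R}\cup\{\infty\}$ be a proper, bounded below, $d$-lower semicontinuous function. Then for every $x_0\in X$ and $\lambda>0$ there exists $z\in X$ such that (i) $f(z)+\lambda\, d(z,x_0)\le f(x_0)$; (ii) $f(y)=f(z)$ for all $y\in S_\lambda(z)$; (iii) $f(z)<f(x)+\lambda\, d(x,z)$ for all $x\in X\setminus S_\lambda(z)$; (iv) for every sequence $(x_n)$ in $X$, if $f(x_n)+\lambda\, d(x_n,z)\to f(z)$, then $\lim_{n\to\infty} d(x_n,z)=0$.
   Context: A quasi-pseudometric on $X$ is a map $d:X\times X\to[0,\infty)$ with $d(x,x)=0$ and $d(x,z)\le d(x,y)+d(y,z)$ for all $x,y,z$. The topology $\tau_d$ has neighborhood base at $x$ the balls $\{y: d(x,y)<r\}$, $r>0$; ''$d$-lower semicontinuous'' means lower semicontinuous for $\tau_d$. Set $\bar d(x,y)=d(y,x)$ and $d^s=\max\{d,\bar d\}$; $x_n\to x$ in $d^s$ iff $d(x,x_n)\to0$ and $d(x_n,x)\to0$. A sequence is $\bar d$-bounded if there are $x\in X$, $r>0$ with $\bar d(x,x_n)\le r$ for all $n$. $f$ is proper if $\operatorname{dom} f=\{x:f(x)<\infty\}\ne\emptyset$. For $\alpha>0$, $S_\alpha(x)=\{y\in X: f(y)+\alpha\, d(y,x)\le f(x)\}$. *)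

(* Defs.v *)
From HB Require Import structures.
From mathcomp Require Import all_boot all_order all_algebra.
From mathcomp Require Import all_classical all_reals all_analysis.
Set Implicit Arguments. Unset Strict Implicit. Unset Printing Implicit Defensive.
Import Order.TTheory GRing.Theory Num.Theory.
Import numFieldNormedType.Exports.
Local Open Scope ring_scope.
Local Open Scope classical_set_scope.
Local Open Scope ereal_scope.

Definition quasi_pseudometric {R : realType} {X : Type} (d : X -> X -> R) : Prop :=
  (forall x y, (0 <= d x y)%R) /\ (forall x, d x x = 0%R) /\
  (forall x y z, (d x z <= d x y + d y z)%R).

Definition dbar {R : realType} {X : Type} (d : X -> X -> R) : X -> X -> R :=
  fun x y => d y x.
Definition dsym {R : realType} {X : Type} (d : X -> X -> R) : X -> X -> R :=
  fun x y => Num.max (d x y) (dbar d x y).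

Definition dbar_bounded {R : realType} {X : Type} (d : X -> X -> R) (u : nat -> X) : Prop :=
  exists x : X, exists r : R, (0 < r)%R /\ forall n, (dbar d x (u n) <= r)%R.

Definition dsym_converges {R : realType} {X : Type} (d : X -> X -> R) (u : nat -> X) (x : X) : Prop :=
  ((fun n => d x (u n)) @ \oo --> 0%R) /\ ((fun n => d (u n) x) @ \oo --> 0%R).

Definition dbar_bounded_seq_compact {R : realType} {X : Type} (d : X -> X -> R) : Prop :=
  forall u : nat -> X, dbar_bounded d u ->
    exists phi : nat -> nat, {homo phi : m n / (m < n)%N >-> (m < n)%N} /\
      exists x : X, dsym_converges d (u \o phi) x.

(* lower semicontinuity for tau_d, whose neighborhood base at x is the balls
   {y | d x y < r}, r > 0 *)
Definition d_lsc {R : realType} {X : Type} (d : X -> X -> R) (f : X -> \bar R) : Prop :=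
  forall x : X, forall t : \bar R, t < f x ->
    exists r : R, (0 < r)%R /\ forall y, (d x y < r)%R -> t < f y.

(* f : X -> R \cup {+oo}: never -oo *)
Definition no_minus_infty {R : realType} {X : Type} (f : X -> \bar R) : Prop :=
  forall x, f x != -oo.

Definition proper_fun {R : realType} {X : Type} (f : X -> \bar R) : Prop :=
  exists x, f x < +oo.

Definition bounded_below {R : realType} {X : Type} (f : X -> \bar R) : Prop :=
  exists m : R, forall x, m%:E <= f x.

Definition S_set {R : realType} {X : Type} (d : X -> X -> R) (f : X -> \bar R)
  (alpha : R) (x : X) : set X :=
  [set y | f y + (alpha * d y x)%:E <= f x].

(* Main.v *)
Require Import Defs.
From HB Require Import structures.
From mathcomp Require Import all_boot all_order all_algebra.
From mathcomp Require Import all_classical all_reals all_analysis.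
From mathcomp Require Import ring lra.
Import Order.TTheory GRing.Theory Num.Theory.
Import numFieldNormedType.Exports.
Local Open Scope ring_scope.
Local Open Scope classical_set_scope.

Definition ev (P : nat -> Prop) := exists N, forall n, (N <= n)%N -> P n.

Lemma ev_and {P Q : nat -> Prop} : ev P -> ev Q -> ev (fun n => P n /\ Q n).
Proof.
move=> [N1 H1] [N2 H2]; exists (maxn N1 N2) => n hn; split.
- by apply: H1; apply: leq_trans hn; apply: leq_maxl.
- by apply: H2; apply: leq_trans hn; apply: leq_maxr.
Qed.

Lemma ev_ex {P : nat -> Prop} : ev P -> exists n, P n.
Proof. by move=> [N H]; exists N; apply: H. Qed.

Lemma cvg0_ev {R : realType} {g : nat -> R} : g @ \oo --> 0 ->
  forall e, 0 < e -> ev (fun n => `|g n| < e).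
Proof.
move/cvgrPdist_lt => H e e0; have [N _ HN] := H e e0.
by exists N => n hn; have := HN n hn; rewrite /= sub0r normrN.
Qed.

Lemma ext_sub {R : realType} {e : \bar R} {x y : R} :
  (e + x%:E <= y%:E)%E -> (e <= (y - x)%:E)%E.
Proof.
case: e => [r| |] //=; rewrite ?lee_fin => h; last by rewrite leNye.
by rewrite lerBrDr.
Qed.

Lemma ext_lb {R : realType} {e : \bar R} {m x c : R} :
  (m%:E <= e)%E -> (e + x%:E <= c%:E)%E -> m + x <= c.
Proof.
case: e => [r| |] //=; rewrite ?lee_fin => h1 h2; lra.
Qed.

Lemma ltey_of {R : realType} {a e : \bar R} {x : R} :
  (a + x%:E <= e)%E -> (e < +oo)%E -> (a < +oo)%E.
Proof.
case: a => [r| |] //= h1 h2; first by rewrite ltry.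
by have := le_lt_trans h1 h2.
Qed.

Lemma homo_ge {phi : nat -> nat} :
  {homo phi : m n / (m < n)%N >-> (m < n)%N} -> forall n, (n <= phi n)%N.
Proof.
move=> ph; elim => // n IH; apply: leq_ltn_trans IH (ph n n.+1 (ltnSn n)).
Qed.

Lemma lsc_lim {R : realType} {X : Type} {d : X -> X -> R} {f : X -> \bar R}
  (hlsc : d_lsc d f) {w : X} {u : nat -> X} {c : R} :
  (forall e, 0 < e -> ev (fun n => d w (u n) < e)) ->
  (forall e, 0 < e -> ev (fun n => (f (u n) <= (c + e)%:E)%E)) ->
  (f w <= c%:E)%E.
Proof.
move=> Hd Hf; apply/lee_addgt0Pr => e e0.
rewrite leNgt; apply/negP; rewrite -EFinD => H.
have [r [r0 Hr]] := hlsc w _ H.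
have e20 : 0 < e / 2 by lra.
have [n [h1 h2]] := ev_ex (ev_and (Hd r r0) (Hf (e/2) e20)).
have := lt_le_trans (Hr _ h1) h2; rewrite lte_fin; lra.
Qed.

Lemma lsc_S {R : realType} {X : Type} {d : X -> X -> R} {f : X -> \bar R}
  (hd : quasi_pseudometric d) (hlsc : d_lsc d f) {lambda : R} (l0 : 0 <= lambda)
  {a w : X} {u : nat -> X} {c : R} :
  (forall e, 0 < e -> ev (fun n => d w (u n) < e)) ->
  (forall e, 0 < e -> ev (fun n => (f (u n) + (lambda * d (u n) a)%:E <= (c + e)%:E)%E)) ->
  (f w + (lambda * d w a)%:E <= c%:E)%E.
Proof.
case: hd => [hd0 [hdxx hdtri]] Hd Hf.
suff: (f w <= (c - lambda * d w a)%:E)%E.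
  case: (f w) => [r| |] //=.
  - by rewrite -EFinD !lee_fin => h; lra.
  - by move=> _; rewrite addNye leNye.
apply: (lsc_lim hlsc Hd) => e e0.
have dl0 : 0 < e / (2 * (lambda + 1)) by apply: divr_gt0; lra.
have e20 : 0 < e / 2 by lra.
have [N HN] := ev_and (Hd _ dl0) (Hf (e/2) e20).
exists N => n /HN [h1 h2].
have h3 := ext_sub h2.
apply: (le_trans h3); rewrite lee_fin.
have h4 : lambda * d w (u n) <= (lambda + 1) * (e / (2 * (lambda + 1))).
  apply: ler_pM; [lra | exact: hd0 | lra | exact: ltW].
have h5 : (lambda + 1) * (e / (2 * (lambda + 1))) = e / 2.
  by field; lra.
have h6 := ler_wpM2l l0 (hdtri w (u n) a).
rewrite mulrDr in h6.
lra.
Qed.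

Theorem mainTheorem3 (R : realType) (X : Type) (d : X -> X -> R) (f : X -> \bar R)
  (hd : quasi_pseudometric d) (hcomp : dbar_bounded_seq_compact d)
  (hfinf : no_minus_infty f) (hprop : proper_fun f) (hbdd : bounded_below f)
  (hlsc : d_lsc d f) :
  forall (x0 : X) (lambda : R), 0 < lambda ->
  exists z : X,
    ((f z + (lambda * d z x0)%:E <= f x0)%E) /\
    (forall y, S_set d f lambda z y -> f y = f z) /\
    (forall x, ~ S_set d f lambda z x -> (f z < f x + (lambda * d x z)%:E)%E) /\
    (forall u : nat -> X,
        (fun n => (f (u n) + (lambda * d (u n) z)%:E)%E) @ \oo --> f z ->
        (fun n => d (u n) z) @ \oo --> 0).
Proof.
move=> x0 lambda l0.
have hd' := hd.
case: hd' => [hd0 [hdxx hdtri]].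
case: hbdd => m hm.
have fin_of : forall y c, (f y <= c%:E)%E -> f y = (fine (f y))%:E.
  by move=> y c; move: (hfinf y); case: (f y).
have fin_of2 : forall y x c, (f y + x%:E <= c%:E)%E -> f y = (fine (f y))%:E.
  by move=> y x c /ext_sub /fin_of.
have fge : forall y, m <= fine (f y) \/ f y = +oo%E.
  move=> y; have := hm y; move: (hfinf y); case: (f y) => [r| |] //= _.
  - by rewrite lee_fin; left.
  - by right.
have main : forall a, (f a < +oo)%E -> exists z,
    (f z + (lambda * d z a)%:E <= f a)%E /\
    (forall y, S_set d f lambda z y -> f y = f z /\ d y z = 0).
  move=> a ha.
  set fa := fine (f a).
  have Efa : f a = fa%:E by rewrite /fa fineK // fin_numE hfinf -ltey ha.
  set A := S_set d f lambda a.
  have finA : forall y, A y -> f y = (fine (f y))%:E.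
    by move=> y; rewrite /A /S_set /= Efa; exact: fin_of2.
  have leA : forall y, A y -> fine (f y) + lambda * d y a <= fa.
    move=> y hy; move: (hy); rewrite /A /S_set /= Efa (finA y hy) /=.
    by rewrite -EFinD lee_fin.
  have lbA : forall y, A y -> m <= fine (f y).
    by move=> y hy; have := hm y; rewrite (finA y hy) lee_fin.
  set E := [set fine (f y) | y in A].
  have aA : A a by rewrite /A /S_set /= hdxx mulr0 adde0.
  have hElb : has_lbound E by exists m => r [y hy <-]; exact: lbA.
  have hEinf : has_inf E by split => //; exists fa; exists a.
  set I := inf E.
  have hI : forall y, A y -> I <= fine (f y).
    by move=> y hy; apply: (ge_inf hElb); exists y.
  have hseq : forall n : nat, exists y, A y /\ fine (f y) < I + n.+1%:R^-1.
    move=> n.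
    have hp : 0 < n.+1%:R^-1 :> R by rewrite invr_gt0 ltr0Sn.
    have [r [y hy <-] hr] := inf_adherent hp hEinf.
    by exists y.
  have [u hu] := choice hseq.
  have ub : dbar_bounded d u.
    exists a, ((fa - m)/lambda + 1); split.
    - have h1 := lbA a aA.
      have : 0 <= (fa - m)/lambda by apply: divr_ge0; rewrite /fa; lra.
      lra.
    - move=> n; rewrite /dbar.
      have [hA _] := hu n.
      have h1 := leA _ hA.
      have h2 := lbA _ hA.
      have : d (u n) a <= (fa - m)/lambda by rewrite ler_pdivlMr // mulrC; lra.
      lra.
  have [phi [phih [w [cw1 cw2]]]] := hcomp _ ub.
  have phige := homo_ge phih.
  have cw1' : forall e, 0 < e -> ev (fun n => d w ((u \o phi) n) < e).
    by move=> e e0; have [N HN] := cvg0_ev cw1 _ e0; exists N => n /HN; rewrite ger0_norm.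
  have wA : A w.
    rewrite /A /S_set /= Efa.
    apply: (lsc_S hd hlsc (ltW l0) cw1') => e e0; exists 0%N => n _ /=.
    have [hA _] := hu (phi n).
    move: (hA); rewrite /A /S_set /= Efa => h.
    by apply: le_trans h _; rewrite lee_fin; lra.
  have wmin : (f w <= I%:E)%E.
    apply: (lsc_lim hlsc cw1') => e e0.
    have [N hN] := ltr_add_invr (y := 0) e0.
    rewrite add0r in hN.
    exists N => n hn.
    change (f (u (phi n)) <= (I + e)%:E)%E.
    have [hA hlt] := hu (phi n).
    rewrite (finA _ hA) lee_fin.
    have : (phi n).+1%:R^-1 <= N.+1%:R^-1 :> R.
      rewrite lef_pV2 ?posrE ?ltr0Sn // ler_nat ltnS.
      exact: leq_trans hn (phige n).
    move=> hpq; move: hlt hN hpq; set p := (phi n).+1%:R^-1; set q := N.+1%:R^-1; clearbody p q; move=> *; lra.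
  exists w; split; first exact: wA.
  move=> y hy.
  have Ew := finA w wA.
  set fw := fine (f w) in Ew *.
  have hy' := hy; rewrite /S_set /= Ew in hy'.
  have Ey := fin_of2 _ _ _ hy'.
  set fy := fine (f y) in Ey *.
  rewrite Ey -EFinD lee_fin in hy'.
  have hyA : A y.
    rewrite /A /S_set /= Efa Ey -EFinD lee_fin.
    have := leA _ wA; rewrite -/fw.
    have h6 := ler_wpM2l (ltW l0) (hdtri y w a); rewrite mulrDr in h6.
    lra.
  have h1 := hI y hyA; rewrite -/fy in h1.
  have h2 : fw <= I by move: wmin; rewrite Ew lee_fin.
  have hdy0 : 0 <= d y w := hd0 y w.
  have h4 : 0 <= lambda * d y w by apply: mulr_ge0 => //; exact: ltW.
  split.
  - rewrite Ey Ew; congr EFin; apply/eqP; rewrite eq_le; apply/andP; split; lra.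
  - apply/eqP; rewrite eq_le hdy0 andbT -(pmulr_rle0 _ l0); lra.
have rest : forall z, (f z < +oo)%E ->
    (forall y, S_set d f lambda z y -> f y = f z /\ d y z = 0) ->
    (forall y, S_set d f lambda z y -> f y = f z) /\
    (forall x, ~ S_set d f lambda z x -> (f z < f x + (lambda * d x z)%:E)%E) /\
    (forall u : nat -> X,
        (fun n => (f (u n) + (lambda * d (u n) z)%:E)%E) @ \oo --> f z ->
        (fun n => d (u n) z) @ \oo --> 0).
  move=> z hz hS.
  set fz := fine (f z).
  have Efz : f z = fz%:E by rewrite /fz fineK // fin_numE hfinf -ltey hz.
  split; first by move=> y /hS [].
  split.
    move=> x hx; rewrite ltNge; apply/negP => h; apply: hx; exact: h.
  move=> u hu.
  have hu' : forall e, 0 < e -> ev (fun n => (f (u n) + (lambda * d (u n) z)%:E <= (fz + e)%:E)%E).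
    move=> e e0; rewrite Efz in hu; move/fine_cvgP: hu => [hfin hcv].
    move/cvgrPdist_lt: hcv => hcv.
    have [N1 _ HN1] := hfin.
    have [N2 _ HN2] := hcv e e0.
    exists (maxn N1 N2) => n hn.
    have h1 := HN1 n (leq_trans (leq_maxl _ _) hn).
    have h2 := HN2 n (leq_trans (leq_maxr _ _) hn).
    move: h1 h2 => /= h1 h2.
    rewrite -(fineK h1) lee_fin.
    move: h2; rewrite ltr_distlC => /andP [_ h3].
    exact: ltW.
  apply/cvgrPdist_lt => e e0.
  apply: contrapT => hne.
  have hbad : forall N, exists n, (N <= n)%N /\ e <= d (u n) z.
    move=> N; apply: contrapT => hN; apply: hne; exists N => // n /= hn.
    rewrite sub0r normrN ger0_norm //; rewrite ltNge; apply/negP => hle.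
    by apply: hN; exists n; split.
  have [N0 HN0] := hu' 1 ltr01.
  have [psi Hpsi] := choice (fun n => hbad (n + N0)%N).
  have vb : dbar_bounded d (u \o psi).
    have mfz : m <= fz.
      by case: (fge z) => //; rewrite Efz.
    exists z, ((fz + 1 - m) / lambda + 1); split.
    - have : 0 <= (fz + 1 - m)/lambda by apply: divr_ge0; lra.
      lra.
    - move=> n; rewrite /dbar /=.
      have [hn1 _] := Hpsi n.
      have h := HN0 _ (leq_trans (leq_addl n N0) hn1).
      have hh := ext_lb (hm (u (psi n))) h.
      have : d (u (psi n)) z <= (fz + 1 - m)/lambda by rewrite ler_pdivlMr // mulrC; lra.
      lra.
  have [phi [phih [w [cw1 cw2]]]] := hcomp _ vb.
  have phige := homo_ge phih.
  have wS : S_set d f lambda z w.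
    rewrite /S_set /= Efz.
    apply: (lsc_S hd hlsc (ltW l0) (u := (u \o psi) \o phi)).
    - move=> e' e'0; have [N HN] := cvg0_ev cw1 _ e'0; exists N => n /HN.
      by rewrite ger0_norm.
    - move=> e' e'0; have [N HN] := hu' e' e'0; exists N => n hn /=; apply: HN.
      apply: leq_trans hn _; apply: leq_trans (phige n) _.
      exact: leq_trans (leq_addr N0 _) (proj1 (Hpsi _)).
  have [_ dwz] := hS w wS.
  have [N HN] := cvg0_ev cw2 _ e0.
  have hN := HN N (leqnn N); rewrite ger0_norm // in hN.
  have [_ hge] := Hpsi (phi N).
  have := hdtri (u (psi (phi N))) w z; rewrite dwz addr0.
  move: hN => /= hN.
  lra.
have [hx0|hx0] := boolP (f x0 < +oo)%E.
- have [z [h1 h2]] := main x0 hx0.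
  exists z; split => //.
  apply: rest h2; exact: ltey_of h1 hx0.
- have [a ha] := hprop.
  have [z [h1 h2]] := main a ha.
  exists z; split.
    by move: hx0; rewrite ltey negbK => /eqP ->; exact: leey.
  apply: rest h2; exact: ltey_of h1 ha.
Qed.
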